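(* Let $G$ be a group with unit $e$, $X$ a set and $(X_g,\alpha_g)_{g\in G}$ a lax partial action of $G$ on $X$. The following are equivalent: (i) $(X_g,\alpha_g)$ is a partial action; (ii) the inclusion $\{(h,g,x)\in G\times G\times X: x\in X_{g^{-1}},\ \alpha_g(x)\in X_{h^{-1}}\}\subseteq \{(h,g,x)\in G\times G\times X : x\in X_{g^{-1}}\cap X_{(hg)^{-1}}\}$ is a bijection (i.e. the two sets are equal); (iii) for each $g\in G$ one has $\alpha_g(X_{g^{-1}})\subseteq X_g$.
   Context: A partial action datum of $G$ on $X$ is a family of subsets $X_g\subseteq X$ ($g\in G$) with maps $\alpha_g:X_{g^{-1}}\to X$. It is a partial action if (PA1) $X_e=X$ and $\alpha_e=\mathrm{id}_X$; (PA2) $\alpha_g(X_{g^{-1}}\cap X_h)\subseteq X_g\cap X_{gh}$ for all $g,h$; (PA3) $\alpha_h\circ\alpha_g=\alpha_{hg}$ on $X_{g^{-1}}\cap X_{(hg)^{-1}}$. It is a lax partial action if (LPA1) $X_e=X$ and $\alpha_e=\mathrm{id}_X$; (LPA2) $X_{g^{-1}}\cap\alpha_g^{-1}(X_{h^{-1}})\subseteq X_{(hg)^{-1}}$; (LPA3) $\alpha_h\circ\alpha_g=\alpha_{hg}$ on $X_{g^{-1}}\cap\alpha_g^{-1}(X_{h^{-1}})$. (By (LPA2) the first set in (ii) is contained in the second.) *)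

(* Defs.v *)
Record is_group (G : Type) (mul : G -> G -> G) (e : G) (inv : G -> G) : Prop := {
  grp_assoc : forall a b c, mul a (mul b c) = mul (mul a b) c;
  grp_mul1g : forall a, mul e a = a;
  grp_mulg1 : forall a, mul a e = a;
  grp_mulVg : forall a, mul (inv a) a = e;
  grp_mulgV : forall a, mul a (inv a) = e
}.

(** A partial action datum: Xs g is the subset X_g of X (a predicate),
    and alpha g is the map alpha_g : X_{g^{-1}} -> X, represented as a total
    function X -> X of which only the values on X_{g^{-1}} are relevant
    (all conditions below only evaluate alpha g on X_{g^{-1}}). *)

Definition partial_action (G X : Type) (mul : G -> G -> G) (e : G) (inv : G -> G)
  (Xs : G -> X -> Prop) (alpha : G -> X -> X) : Prop :=
  ((forall x, Xs e x) /\ (forall x, alpha e x = x)) /\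
  (forall g h x, Xs (inv g) x -> Xs h x ->
      Xs g (alpha g x) /\ Xs (mul g h) (alpha g x)) /\
  (forall g h x, Xs (inv g) x -> Xs (inv (mul h g)) x ->
      alpha h (alpha g x) = alpha (mul h g) x).

Definition lax_partial_action (G X : Type) (mul : G -> G -> G) (e : G) (inv : G -> G)
  (Xs : G -> X -> Prop) (alpha : G -> X -> X) : Prop :=
  ((forall x, Xs e x) /\ (forall x, alpha e x = x)) /\
  (forall g h x, Xs (inv g) x -> Xs (inv h) (alpha g x) -> Xs (inv (mul h g)) x) /\
  (forall g h x, Xs (inv g) x -> Xs (inv h) (alpha g x) ->
      alpha h (alpha g x) = alpha (mul h g) x).

(* Main.v *)
Require Import Defs.

Section GL.
Variables (G : Type) (mul : G -> G -> G) (e : G) (inv : G -> G).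
Hypothesis HG : is_group G mul e inv.

Lemma inv_uniq a b : mul a b = e -> b = inv a.
Proof.
  intro H. destruct HG as [As M1 M2 MV MV'].
  rewrite <- (M1 b), <- (MV a), <- As, H, M2. reflexivity.
Qed.

Lemma invK a : inv (inv a) = a.
Proof. symmetry. apply inv_uniq. apply (grp_mulVg _ _ _ _ HG). Qed.

Lemma inv1 : inv e = e.
Proof. symmetry. apply inv_uniq. apply (grp_mulg1 _ _ _ _ HG). Qed.

Lemma invM a b : inv (mul a b) = mul (inv b) (inv a).
Proof.
  symmetry. apply inv_uniq. destruct HG as [As M1 M2 MV MV'].
  rewrite As, <- (As a b), MV', M2, MV'. reflexivity.
Qed.
End GL.

Theorem mainTheorem3 (G X : Type) (mul : G -> G -> G) (e : G) (inv : G -> G)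
  (HG : is_group G mul e inv)
  (Xs : G -> X -> Prop) (alpha : G -> X -> X)
  (Hlax : lax_partial_action G X mul e inv Xs alpha) :
  (* (i) <-> (ii): the two subsets of G x G x X coincide *)
  (partial_action G X mul e inv Xs alpha <->
     (forall (h g : G) (x : X),
        (Xs (inv g) x /\ Xs (inv h) (alpha g x)) <->
        (Xs (inv g) x /\ Xs (inv (mul h g)) x))) /\
  (* (i) <-> (iii) *)
  (partial_action G X mul e inv Xs alpha <->
     (forall (g : G) (x : X), Xs (inv g) x -> Xs g (alpha g x))).
Proof.
  destruct Hlax as [[L1a L1b] [L2 L3]].
  pose proof HG as HG'. destruct HG' as [As M1 M2 MV MV'].
  assert (PA2 : (forall (g : G) (x : X), Xs (inv g) x -> Xs g (alpha g x)) ->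
     forall g h x, Xs (inv g) x -> Xs h x ->
      Xs g (alpha g x) /\ Xs (mul g h) (alpha g x)).
  { intros H3 g h x Hg Hh. split. apply H3; assumption.
    set (y := alpha g x).
    assert (Hy : Xs (inv (inv g)) y) by (rewrite (invK _ _ _ _ HG); apply H3; assumption).
    assert (Hyx : alpha (inv g) y = x).
    { unfold y. rewrite L3; [| assumption | assumption]. rewrite MV. apply L1b. }
    assert (Hh' : Xs (inv (inv h)) (alpha (inv g) y)) by (rewrite Hyx, (invK _ _ _ _ HG); assumption).
    pose proof (L2 (inv g) (inv h) y Hy Hh') as R.
    rewrite (invM _ _ _ _ HG), !(invK _ _ _ _ HG) in R. exact R. }
  assert (I3 : (forall (g : G) (x : X), Xs (inv g) x -> Xs g (alpha g x)) ->
     forall h g x, Xs (inv g) x -> Xs (inv (mul h g)) x -> Xs (inv h) (alpha g x)).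
  { intros H3 h g x Hg Hhg. destruct (PA2 H3 g (inv (mul h g)) x Hg Hhg) as [_ R].
    rewrite (invM _ _ _ _ HG), As, MV', M1 in R. exact R. }
  assert (E3 : partial_action G X mul e inv Xs alpha <->
     (forall (g : G) (x : X), Xs (inv g) x -> Xs g (alpha g x))).
  { split.
    - intros [_ [P2 _]] g x Hg. apply (P2 g e x Hg (L1a x)).
    - intros H3. split; [split; assumption|]. split. apply PA2; assumption.
      intros g h x Hg Hhg. apply L3. assumption. apply I3; assumption. }
  split; [| exact E3].
  assert (K : (forall (g : G) (x : X), Xs (inv g) x -> Xs g (alpha g x)) <->
     (forall (h g : G) (x : X),
        (Xs (inv g) x /\ Xs (inv h) (alpha g x)) <->
        (Xs (inv g) x /\ Xs (inv (mul h g)) x))).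
  2:{ destruct E3, K. split; auto. }
  split.
  - intros H3 h g x. split.
    + intros [A B]. split. assumption. apply (L2 g h x A B).
    + intros [A B]. split. assumption. apply I3; assumption.
  - intros H2 g x Hg. destruct (proj2 (H2 (inv g) g x)) as [_ R].
    + split. assumption. rewrite MV, (inv1 _ _ _ _ HG). apply L1a.
    + rewrite (invK _ _ _ _ HG) in R. exact R.
Qed.
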